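(* In the LTR setting, assume $|y(x)|\le M$ and $|\widetilde y_S(x)|\le M$ for all $x\in X$ and all training sets $S$, and that the pseudo-targets are $\beta_{loc}$-score-stable. Let $S,S'$ be two training sets differing in exactly one point, $h=h_S$, $h'=h_{S'}$ the LTR minimizers, $\Delta h=h'-h$ and $A=1+\kappa\sqrt{C+C'}$. Then for every $x\in X$, $$\frac{C}{m}\big[(h'(x)-y(x))^2-(h(x)-y(x))^2\big]+\frac{C'}{u}\big[(h'(x)-\widetilde y_{S'}(x))^2-(h(x)-\widetilde y_S(x))^2\big]\le 2AM\Big(\kappa\|\Delta h\|_K\Big(\frac Cm+\frac{C'}u\Big)+\beta_{loc}\frac{C'}u\Big).$$
   Context: Transductive setting: fixed full sample $X=\{x_1,\dots,x_{m+u}\}$ with real labels $y(x)$; training set $S\subset X$ of size $m$ with labels revealed, test set $T=X\setminus S$ of size $u$. Two training sets $S,S'$ differ in exactly one point if $S'=(S\setminus\{x\})\cup\{x'\}$ with $x\in S$, $x'\in X\setminus S$. LTR setting: $K$ is a positive semidefinite kernel on $X$ with $K(x,x)\le\kappa^2$ for all $x\in X$, $H_K$ its reproducing kernel Hilbert space with norm $\|\cdot\|_K$. For each training set $S$ a pseudo-target function $\widetilde y_S\colon X\to\mathbb{R}$ is given. With constants $C,C'\ge0$, the LTR objective is $$F(f,S)=\|f\|_K^2+\frac{C}{m}\sum_{x\in S}(f(x)-y(x))^2+\frac{C'}{u}\sum_{x\in T}(f(x)-\widetilde y_S(x))^2,$$ and the LTR algorithm returns $h_S=\arg\min_{f\in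 H_K}F(f,S)$. The pseudo-targets are $\beta_{loc}$-score-stable if $|\widetilde y_S(x)-\widetilde y_{S'}(x)|\le\beta_{loc}$ for all $x\in X$ and all pairs $S,S'$ differing in exactly one point. *)

(* Defs.v *)
From HB Require Import structures.
From mathcomp Require Import all_boot all_order all_algebra.
Set Implicit Arguments. Unset Strict Implicit. Unset Printing Implicit Defensive.
Import Order.TTheory GRing.Theory Num.Theory.
Local Open Scope ring_scope.

Section LTR.
Variables (R : rcfType) (X : finType).

(* Kernel K : X -> X -> R.  Elements of H_K are the functions
   f = \sum_z a z K(z, .) ; we represent them by coefficient vectors a. *)
Definition kfun (K : X -> X -> R) (a : X -> R) : X -> R :=
  fun x => \sum_(z : X) a z * K z x.

(* ||K a||_K^2 = a^T K a (reproducing property). *)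
Definition kquad (K : X -> X -> R) (a : X -> R) : R :=
  \sum_(z : X) \sum_(w : X) a z * a w * K z w.

Definition rkhs_norm (K : X -> X -> R) (a : X -> R) : R := Num.sqrt (kquad K a).

Definition psd_kernel (K : X -> X -> R) : Prop :=
  (forall z w, K z w = K w z) /\ (forall a : X -> R, 0 <= kquad K a).

Definition ltr_obj (K : X -> X -> R) (C C' : R) (m u : nat) (y : X -> R)
    (ytS : X -> R) (S : {set X}) (a : X -> R) : R :=
  kquad K a
  + C / m%:R * \sum_(x in S) (kfun K a x - y x) ^+ 2
  + C' / u%:R * \sum_(x in ~: S) (kfun K a x - ytS x) ^+ 2.

Definition is_ltr_min K C C' m u y ytS S (a : X -> R) : Prop :=
  forall b : X -> R, ltr_obj K C C' m u y ytS S a <= ltr_obj K C C' m u y ytS S b.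

Definition differ_one (S S' : {set X}) : Prop :=
  exists x x', [/\ x \in S, x' \notin S & S' = x' |: (S :\ x)].

Definition score_stable (m : nat) (yt : {set X} -> X -> R) (beta : R) : Prop :=
  forall S S' : {set X}, #|S| = m -> differ_one S S' ->
    forall x, `|yt S x - yt S' x| <= beta.

End LTR.

(* Main.v *)
Require Import Defs.
From HB Require Import structures.
From mathcomp Require Import all_boot all_order all_algebra.
Import Order.TTheory GRing.Theory Num.Theory.
Local Open Scope ring_scope.

Section Aux.
Variables (R : rcfType) (X : finType) (K : X -> X -> R).

Definition Bf (a b : X -> R) : R := \sum_(z : X) \sum_(w : X) a z * b w * K z w.

Lemma Bf_lin (t r : R) (a c b : X -> R) :
  Bf (fun z => t * a z + r * c z) b = t * Bf a b + r * Bf c b.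
Proof.
rewrite /Bf !mulr_sumr -big_split; apply: eq_bigr => z _.
rewrite !mulr_sumr -big_split; apply: eq_bigr => w _.
by rewrite !mulrDl !mulrA.
Qed.

Lemma Bf_sym (a b : X -> R) : (forall z w, K z w = K w z) -> Bf a b = Bf b a.
Proof.
move=> Ks; rewrite /Bf exchange_big; apply: eq_bigr => z _; apply: eq_bigr => w _.
by rewrite Ks [b z * _]mulrC.
Qed.

Definition ev (x : X) : X -> R := fun z => (z == x)%:R.

Lemma sum_ev (F : X -> R) x : \sum_(w : X) F w * ev x w = F x.
Proof.
rewrite (bigD1 x) //= big1 ?addr0 /ev ?eqxx ?mulr1 // => w /negbTE ->.
by rewrite mulr0.
Qed.

Lemma Bf_ev (a : X -> R) x : Bf a (ev x) = kfun K a x.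
Proof.
rewrite /Bf /kfun; apply: eq_bigr => z _.
rewrite -(sum_ev (fun w => a z * K z w) x); apply: eq_bigr => w _.
by rewrite -!mulrA [ev x w * _]mulrC.
Qed.

Lemma kfun_ev x : kfun K (ev x) x = K x x.
Proof.
rewrite /kfun -[RHS](sum_ev (fun w => K w x) x); apply: eq_bigr => w _.
by rewrite mulrC.
Qed.

Lemma CS (b : X -> R) x : psd_kernel K ->
  kfun K b x ^+ 2 <= kquad K b * K x x.
Proof.
move=> [Ks Kp].
set s := kfun K b x; set Q := kquad K b; set k := K x x.
have HQ : kquad K b = Bf b b by [].
have key : forall t r, 0 <= t * (t * Q + r * s) + r * (t * s + r * k).
  move=> t r.
  have : 0 <= Bf (fun z => t * b z + r * ev x z) (fun z => t * b z + r * ev x z)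
    by exact: Kp.
  rewrite Bf_lin.
  rewrite (Bf_sym _ _ Ks) (Bf_lin t r b (ev x) b) (Bf_sym (ev x) (fun z => t * b z + r * ev x z) Ks) (Bf_lin t r b (ev x) (ev x)).
  rewrite Bf_ev (Bf_sym (ev x) b Ks) Bf_ev Bf_ev kfun_ev.
  by rewrite -/s.
have k0 : 0 <= k by have := key 0 1; rewrite !(mul0r, mul1r, add0r).
have Q0 : 0 <= Q by have := key 1 0; rewrite !(mul0r, mul1r, addr0).
case: (ltrgt0P k) k0 => // [kp | k0e] _.
  have := key k (- s).
  rewrite !mulNr (mulrC s k) subrr mulr0 oppr0 addr0 pmulr_rge0 // subr_ge0.
  by rewrite -expr2 mulrC.
rewrite k0e mulr0.
case: (eqVneq s 0) => [->|sn0]; first by rewrite expr0n.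
have := key 1 (- ((Q + 1) / (s *+ 2))).
rewrite k0e !mul1r !mulr0 !addr0 -addrA -mulr2n -mulrnAr mulNr divfK; last first.
  by rewrite mulrn_eq0.
by rewrite opprD addrA subrr add0r ler0N1.
Qed.

Lemma kfun_abs (b : X -> R) x kappa : psd_kernel K -> 0 <= kappa ->
  (forall x, K x x <= kappa ^+ 2) ->
  `|kfun K b x| <= kappa * Num.sqrt (kquad K b).
Proof.
move=> Kpsd k0 Kk.
have Q0 : 0 <= kquad K b by case: Kpsd.
rewrite -sqrtr_sqr mulrC.
apply: le_trans (ler_wsqrtr (CS b x Kpsd)) _.
rewrite sqrtrM //; apply: ler_wpM2l; first exact: sqrtr_ge0.
by rewrite -[X in _ <= X](ger0_norm k0) -sqrtr_sqr ler_wsqrtr.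
Qed.

Lemma kfun_sub (a a' : X -> R) x :
  kfun K (fun z => a' z - a z) x = kfun K a' x - kfun K a x.
Proof. by rewrite /kfun -sumrB; apply: eq_bigr => z _; rewrite mulrBl. Qed.

Lemma kquad0 : kquad K (fun _ => 0) = 0.
Proof. by rewrite /kquad big1 // => z _; rewrite big1 // => w _; rewrite !mul0r. Qed.

Lemma kfun0 x : kfun K (fun _ => 0) x = 0.
Proof. by rewrite /kfun big1 // => z _; rewrite mul0r. Qed.

Lemma sum_sq_bound (A : {set X}) (f : X -> R) M n :
  #|A| = n -> (forall x, `|f x| <= M) ->
  \sum_(x in A) (0 - f x) ^+ 2 <= M ^+ 2 *+ n.
Proof.
move=> cA fM; rewrite -cA -sumr_const; apply: ler_sum => z _.
rewrite sub0r sqrrN -(real_normK (num_real (f z))) !expr2.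
by apply: ler_pM => //; exact: normr_ge0.
Qed.

Lemma min_bound C C' (m u : nat) y yt0 (S0 : {set X}) a M kappa x :
  (0 < m)%N -> (0 < u)%N -> #|S0| = m -> #|~: S0| = u ->
  psd_kernel K -> 0 <= kappa -> (forall x, K x x <= kappa ^+ 2) ->
  0 <= C -> 0 <= C' -> 0 <= M ->
  (forall x, `|y x| <= M) -> (forall x, `|yt0 x| <= M) ->
  is_ltr_min K C C' m u y yt0 S0 a ->
  `|kfun K a x| <= kappa * Num.sqrt (C + C') * M.
Proof.
move=> m0 u0 cS cT Kpsd k0 Kk C0 C'0 M0 yM ytM amin.
have cm0 : 0 <= C / m%:R by rewrite divr_ge0.
have cu0 : 0 <= C' / u%:R by rewrite divr_ge0.
have Hq : kquad K a <= (C + C') * M ^+ 2.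
  have h1 : kquad K a <= ltr_obj K C C' m u y yt0 S0 a.
    by rewrite /ltr_obj -addrA lerDl addr_ge0 // mulr_ge0 // sumr_ge0 // => z _;
      exact: sqr_ge0.
  apply: (le_trans h1 (le_trans (amin (fun _ => 0)) _)).
  rewrite /ltr_obj kquad0 add0r.
  under eq_bigr do rewrite kfun0.
  under [X in _ + _ * X]eq_bigr do rewrite kfun0.
  rewrite mulrDl; apply: lerD.
    apply: le_trans (ler_wpM2l cm0 (sum_sq_bound _ _ _ _ cS yM)) _.
    rewrite -(mulr_natr (M ^+ 2) m) mulrCA divfK; last by rewrite pnatr_eq0 -lt0n.
    by rewrite mulrC.
  apply: le_trans (ler_wpM2l cu0 (sum_sq_bound _ _ _ _ cT ytM)) _.
  rewrite -(mulr_natr (M ^+ 2) u) mulrCA divfK; last by rewrite pnatr_eq0 -lt0n.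
  by rewrite mulrC.
apply: le_trans (kfun_abs a x kappa Kpsd k0 Kk) _.
rewrite -mulrA; apply: ler_wpM2l => //.
have -> : M = Num.sqrt (M ^+ 2) by rewrite sqrtr_sqr ger0_norm.
rewrite -sqrtrM ?addr_ge0 //; exact: ler_wsqrtr.
Qed.

End Aux.

Lemma sqdiff (R : realDomainType) (p q L : R) : `|p| <= L -> `|q| <= L ->
  p ^+ 2 - q ^+ 2 <= 2 * L * `|p - q|.
Proof.
move=> pL qL; rewrite subr_sqr mulrC.
apply: le_trans (ler_norm _) _; rewrite normrM; apply: ler_wpM2r; first exact: normr_ge0.
apply: le_trans (ler_normD _ _) _.
by rewrite mulr_natl mulr2n; apply: lerD.
Qed.

Lemma final_eq (R : comNzRingType) (P k c1 c2 b : R) :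
  c1 * (P * k) + c2 * (P * (k + b)) = P * (k * (c1 + c2) + b * c2).
Proof.
rewrite !mulrDr !addrA; congr (_ + _ + _).
- by rewrite mulrCA (mulrC c1).
- by rewrite mulrCA (mulrC c2).
- by rewrite mulrCA (mulrC c2).
Qed.

Theorem lemma11 (R : rcfType) (X : finType) (m u : nat)
  (y : X -> R) (K : X -> X -> R) (kappa C C' M beta : R)
  (yt : {set X} -> X -> R) (S S' : {set X}) (a a' : X -> R) :
  (0 < m)%N -> (0 < u)%N -> #|X| = (m + u)%N ->
  psd_kernel K -> 0 <= kappa -> (forall x, K x x <= kappa ^+ 2) ->
  0 <= C -> 0 <= C' ->
  (forall x, `|y x| <= M) ->
  (forall (S0 : {set X}) x, #|S0| = m -> `|yt S0 x| <= M) ->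
  score_stable m yt beta ->
  #|S| = m -> differ_one S S' ->
  is_ltr_min K C C' m u y (yt S) S a ->
  is_ltr_min K C C' m u y (yt S') S' a' ->
  let h := kfun K a in
  let h' := kfun K a' in
  let A := 1 + kappa * Num.sqrt (C + C') in
  forall x : X,
    C / m%:R * ((h' x - y x) ^+ 2 - (h x - y x) ^+ 2)
    + C' / u%:R * ((h' x - yt S' x) ^+ 2 - (h x - yt S x) ^+ 2)
    <= 2 * A * M * (kappa * rkhs_norm K (fun z => a' z - a z) * (C / m%:R + C' / u%:R)
                    + beta * (C' / u%:R)).
Proof.
move=> m0 u0 cX Kpsd k0 Kk C0 C'0 yM ytM stab cS dS amin amin' h h' A x.
have dS0 := dS; case: dS0 => [x0 [x1 [x0S x1S defS']]].
have M0 : 0 <= M := le_trans (normr_ge0 _) (yM x).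
have cS' : #|S'| = m.
  rewrite defS' cardsU1 in_setD1 (negbTE x1S) andbF /= -cS (cardsD1 x0 S) x0S.
  by [].
have cT : forall S0 : {set X}, #|S0| = m -> #|~: S0| = u.
  move=> S0 c0; apply/(@addnI m); by rewrite -{1}c0 cardsC cX.
have hb := @min_bound R X K C C' m u y (yt S) S a M kappa x m0 u0 cS (cT S cS)
  Kpsd k0 Kk C0 C'0 M0 yM (fun z => ytM S z cS) amin.
have hb' := @min_bound R X K C C' m u y (yt S') S' a' M kappa x m0 u0 cS' (cT S' cS')
  Kpsd k0 Kk C0 C'0 M0 yM (fun z => ytM S' z cS') amin'.
have AM : forall v w : R, `|v| <= kappa * Num.sqrt (C + C') * M -> `|w| <= M ->
    `|v - w| <= A * M.
  move=> v w hv hw; apply: (le_trans (ler_normB v w)).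
  by rewrite /A mulrDl mul1r addrC; apply: lerD.
have hd : `|h' x - h x| <= kappa * rkhs_norm K (fun z => a' z - a z).
  by rewrite /h /h' -kfun_sub; apply: kfun_abs.
have cm0 : 0 <= C / m%:R by rewrite divr_ge0.
have cu0 : 0 <= C' / u%:R by rewrite divr_ge0.
set N := kappa * rkhs_norm K (fun z => a' z - a z).
rewrite /h /h' in hd *; rewrite -final_eq; apply: lerD; apply: ler_wpM2l => //.
  have HH := (sqdiff _ _ _ _ (AM _ _ hb' (yM x)) (AM _ _ hb (yM x))). apply: (le_trans HH).
  rewrite mulrA; apply: ler_wpM2l; first by rewrite mulr_ge0 // mulr_ge0 // addr_ge0 // mulr_ge0 // sqrtr_ge0.
  by rewrite opprB addrA subrK.
have HH := (sqdiff _ _ _ _ (AM _ _ hb' (ytM S' x cS')) (AM _ _ hb (ytM S x cS))). apply: (le_trans HH).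
rewrite mulrA; apply: ler_wpM2l; first by rewrite mulr_ge0 // mulr_ge0 // addr_ge0 // mulr_ge0 // sqrtr_ge0.
have -> : h' x - yt S' x - (h x - yt S x) = (h' x - h x) + (yt S x - yt S' x).
  by rewrite opprD opprK addrACA [- yt S' x + _]addrC.
have HN := ler_normD (h' x - h x) (yt S x - yt S' x). apply: (le_trans HN); apply: lerD => //.
exact: stab.
Qed.
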